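(* Let $d\ge2$, $n\ge1$, $\gamma$ a positive conductivity on the lattice graph below, and $d-1\le t\le dn-1$. Then $\ker T_1^{(t)}=\ker T^{(t)}$.
   Context: Lattice: $D=\{x\in\mathbb Z^d:1\le x_i\le n\ \forall i\}$, $\partial D=\{p\in\mathbb Z^d:\min_{q\in D}\|q-p\|_{\ell^1}=1\}$; $E$ = unordered pairs $pq\subseteq D\cup\partial D$ with $\|p-q\|_{\ell^1}=1$, not both in $\partial D$; $\mathcal N(p)=\{q:pq\in E\}$; each $b\in\partial D$ has a unique neighbour $q_b\in D$. Conductivity $\gamma:E\to(0,\infty)$, symmetric. $S_\gamma\varphi$ is the unique $\mathbf u\in\mathbb R^{D\cup\partial D}$ with $\sum_{q\in\mathcal N(p)}\gamma_{pq}(\mathbf u_q-\mathbf u_p)=0$ for all $p\in D$, $\mathbf u=\varphi$ on $\partial D$; $\Lambda_\gamma\varphi=(\gamma_{bq_b}(\mathbf u_{q_b}-\mathbf u_b))_{b\in\partial D}$ with $\mathbf u=S_\gamma\varphi$ (the DtN matrix). Functions on subsets are extended by zero. With $s(x)=\sum_ix_i$: $L_t=\{x\in D:s(x)=t\}$, $K_t^+=\{x\in\partial D:s(x)=t,\max_ix_i=n+1\}$, $K_t^-=\{x\in\partial D:s(x)=t,\min_ix_i=0\}$, $K_t^{\mathcal S\pm}=\bigcup_{\ell\le t}K_\ell^\pm$, $J_t^{\mathcal S}=K_t^{\mathcal S-}\cup K_{t+1}^{\mathcal S+}$. $T^{(t)}:\mathbb R^{J_t^{\mathcal S}}\to\mathbb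 R^{\partial D\setminus J_t^{\mathcal S}}$, $\varphi\mapsto(\Lambda_\gamma\varphi)|_{\partial D\setminus J_t^{\mathcal S}}$ (the submatrix $\Lambda_\gamma(\partial D\setminus J_t^{\mathcal S};J_t^{\mathcal S})$); $T_1^{(t)}:\mathbb R^{J_t^{\mathcal S}}\to\mathbb R^{L_{t+1}}$, $\varphi\mapsto(S_\gamma\varphi)|_{L_{t+1}}$. *)

(* Defs.v *)
From mathcomp Require Import all_boot all_order all_algebra.
From Stdlib Require Import ClassicalEpsilon.
Set Implicit Arguments. Unset Strict Implicit. Unset Printing Implicit Defensive.
Import Order.TTheory GRing.Theory Num.Theory.

(* Points of the box {0,...,n+1}^d in Z^d; this box contains D and dD. *)
Definition pt (d n : nat) := {ffun 'I_d -> 'I_n.+2}.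

Section Lattice.
Variables (d n : nat).
Local Notation V := (pt d n).

Definition l1dist (p q : V) : nat := \sum_(i < d) ((p i - q i) + (q i - p i))%N.

Definition inD (p : V) : bool := [forall i, (0 < p i)%N && (p i <= n)%N].

Definition inB (p : V) : bool := ~~ inD p && [exists q, inD q && (l1dist p q == 1)%N].

Definition adj (p q : V) : bool :=
  (l1dist p q == 1)%N && (inD p || inB p) && (inD q || inB q) && ~~ (inB p && inB q).

Definition ssum (x : V) : nat := \sum_(i < d) (x i : nat).

Definition inL (t : nat) (x : V) : bool := inD x && (ssum x == t).
Definition inKp (t : nat) (x : V) : bool :=
  [&& inB x, ssum x == t & (\max_(i < d) (x i : nat)) == n.+1].
Definition inKm (t : nat) (x : V) : bool :=
  [&& inB x, ssum x == t & [exists i, (x i : nat) == 0%N]].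
Definition inKSp (t : nat) (x : V) : bool := [exists l : 'I_t.+1, inKp l x].
Definition inKSm (t : nat) (x : V) : bool := [exists l : 'I_t.+1, inKm l x].
Definition inJ (t : nat) (x : V) : bool := inKSm t x || inKSp t.+1 x.

Variable R : realFieldType.
Local Open Scope ring_scope.

(* u solves the Dirichlet problem with boundary data phi
   (u lives on D u dD; it is set to 0 on the remaining box points) *)
Definition dirichlet_sol (g : V -> V -> R) (phi u : V -> R) : Prop :=
  (forall p, inD p -> \sum_(q | adj p q) g p q * (u q - u p) = 0) /\
  (forall b, inB b -> u b = phi b) /\
  (forall p, ~~ inD p -> ~~ inB p -> u p = 0).

(* S_gamma phi := the (unique) solution of the Dirichlet problem *)
Definition Sg (g : V -> V -> R) (phi : V -> R) : V -> R :=
  epsilon (inhabits (fun _ => 0)) (fun u => dirichlet_sol g phi u).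

Definition qnb (b : V) : option V := [pick q | adj b q && inD q].

Definition DtN (g : V -> V -> R) (phi : V -> R) (b : V) : R :=
  let u := Sg g phi in
  match qnb b with Some q => g b q * (u q - u b) | None => 0 end.

(* phi in R^{J_t^S} (extended by zero) *)
Definition onJ (t : nat) (phi : V -> R) : Prop := forall x, ~~ inJ t x -> phi x = 0.

Definition in_ker_T (g : V -> V -> R) (t : nat) (phi : V -> R) : Prop :=
  onJ t phi /\ forall b, inB b -> ~~ inJ t b -> DtN g phi b = 0.

Definition in_ker_T1 (g : V -> V -> R) (t : nat) (phi : V -> R) : Prop :=
  onJ t phi /\ forall x, inL t.+1 x -> Sg g phi x = 0.

End Lattice.

(* Main.v *)
Require Import Defs.
From mathcomp Require Import all_boot all_order all_algebra.
From mathcomp Require Import ring lra zify.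
From HB Require Import structures.
From Stdlib Require Import ClassicalEpsilon.
Import Order.TTheory GRing.Theory Num.Theory.
Set Implicit Arguments. Unset Strict Implicit. Unset Printing Implicit Defensive.


Section Basics.
Variables (d n : nat).
Local Notation V := (pt d n).

Definition sh (p : V) (i : 'I_d) (k : nat) : V :=
  [ffun j => if j == i then inord k else p j].

Lemma shE (p : V) i k j : (k <= n.+1)%N ->
  (sh p i k j : nat) = if j == i then k else p j.
Proof. by move=> hk; rewrite ffunE; case: eqP => // _; rewrite inordK. Qed.

Lemma l1distC (p q : V) : l1dist p q = l1dist q p.
Proof. by rewrite /l1dist; apply: eq_bigr => i _; rewrite addnC. Qed.

Lemma l1_one (p q : V) : l1dist p q = 1%N ->
  exists i, (forall j, j != i -> p j = q j) /\
            ((p i : nat) + 1 = q i \/ (q i : nat) + 1 = p i)%N.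
Proof.
rewrite /l1dist => h.
case: (pickP (fun i => (0 < (p i - q i) + (q i - p i))%N)) => [i hi|H]; last first.
  by move: h; rewrite big1 // => j _; move: (H j); rewrite lt0n => /negbFE/eqP.
move: h; rewrite (bigD1 i) //= => h.
set S := (\sum_(j < d | j != i) ((p j - q j) + (q j - p j)))%N in h.
have rest : S = 0%N.
  move: hi h; set a := (p i : nat); set b := (q i : nat) => /= hi h; lia.
exists i; split; last first.
  move: hi h; set a := (p i : nat); set b := (q i : nat) => /= hi h; lia.
move=> j hj; apply/val_inj/eqP; rewrite eqn_leq.
move/eqP: rest; rewrite sum_nat_eq0 => /forall_inP /(_ j hj).
by rewrite addn_eq0 !subn_eq0 => /andP[-> ->].
Qed.

Lemma l1_sh (p : V) i k : (k <= n.+1)%N -> ((p i : nat) = k.+1 \/ k = (p i).+1) ->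
  l1dist p (sh p i k) = 1%N.
Proof.
move=> hk hpk; rewrite /l1dist (bigD1 i) //= big1 => [|j hj]; rewrite !shE //.
  by rewrite eqxx addn0; move: hpk; set a := (p i : nat); lia.
by rewrite (negbTE hj) subnn.
Qed.

Lemma ssum_diff (p q : V) i : (forall j, j != i -> p j = q j) ->
  (ssum p + q i = ssum q + p i)%N.
Proof.
move=> h; rewrite /ssum (bigD1 i) //= [in RHS](bigD1 i) //=.
rewrite (eq_bigr (fun j => (q j : nat))) => [|j /h -> //].
have E : forall x y z, (x + y + z = z + y + x)%N by lia.
exact: E.
Qed.

Lemma inDP (p : V) : reflect (forall i, 0 < p i <= n)%N (inD p).
Proof. exact: forallP. Qed.

Lemma notD_ex (b : V) : ~~ inD b -> exists i, (b i : nat) = 0%N \/ (b i : nat) = n.+1.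
Proof.
move/inDP => h.
case: (pickP (fun i => ~~ (0 < b i <= n)%N)) => [i hi|H]; last first.
  by exfalso; apply: h => i; move: (H i) => /negbFE.
exists i; have := ltn_ord (b i); lia.
Qed.

Lemma adjC (p q : V) : adj p q = adj q p.
Proof. rewrite /adj l1distC; case: (l1dist q p == 1)%N; case: (inD p); case: (inD q); case: (inB p); case: (inB q) => //. Qed.

Lemma adj_D_sh (p : V) i k : inD p -> (k <= n.+1)%N -> ((p i : nat) = k.+1 \/ k = (p i).+1) ->
  adj p (sh p i k).
Proof.
move=> Dp hk hpk; rewrite /adj l1_sh // Dp /= /inB Dp /= andbT.
case: (boolP (inD (sh p i k))) => //= _; apply/existsP; exists p.
by rewrite Dp l1distC l1_sh.
Qed.

Lemma adj_B (p q : V) : adj p q -> ~~ inD q -> inB q.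
Proof. by rewrite /adj => /andP[/andP[_ /orP[->|->]] _]. Qed.

Lemma adj_l1 (p q : V) : adj p q -> l1dist p q = 1%N.
Proof. by rewrite /adj => /andP[/andP[/andP[/eqP ->]]]. Qed.

Lemma adj_D_or_B (p q : V) : adj p q -> inD q || inB q.
Proof. by rewrite /adj => /andP[/andP[_ ->]]. Qed.

End Basics.


Lemma adj_nb d n (p r : pt d n) : adj p r -> exists j, (forall k, k != j -> r k = p k) /\
   ((r j : nat) + 1 = p j \/ (r j : nat) = p j + 1)%N.
Proof.
move/adj_l1/l1_one => [j [h1 h2]]; exists j; split.
  by move=> k /h1 ->.
lia.
Qed.

Section Analysis.
Variables (d n : nat) (R : realFieldType) (g : pt d n -> pt d n -> R).
Local Open Scope ring_scope.
Hypothesis gpos : forall p q, adj p q -> 0 < g p q.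
Hypothesis d0 : (0 < d)%N.
Local Notation V := (pt d n).
Local Open Scope ring_scope.
Definition i0 : 'I_d := Ordinal d0.

Lemma maxp (W : pred V) (u : V -> R) :
  (forall p, W p -> inD p) ->
  (forall p, W p -> \sum_(q | adj p q) g p q * (u q - u p) = 0) ->
  (forall p q, W p -> adj p q -> ~~ W q -> u q <= 0) ->
  forall p, W p -> u p <= 0.
Proof.
move=> WD harm out p0 Wp0; rewrite leNgt; apply/negP => pos.
case: (arg_maxP u Wp0) => m Wm maxm.
have um : 0 < u m := lt_le_trans pos (maxm _ Wp0).
case: (@arg_minnP _ m (fun x => W x && (u x == u m)) (fun x : V => (x i0 : nat))).
  by rewrite Wm eqxx.
move=> p /andP[Wp /eqP upm] minp.
have Dp := WD p Wp.
have p1 : (0 < p i0)%N by move/inDP: Dp => /(_ i0) /andP[].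
have pl := ltn_ord (p i0).
set q := sh p i0 (p i0 - 1).
have apq : adj p q.
  apply: adj_D_sh => //; move: p1 pl; set a := (p i0 : nat); lia.
have le r : adj p r -> u r <= u p.
  move=> apr; case: (boolP (W r)) => Wr; first by rewrite upm; exact: maxm.
  by apply: le_trans (out _ _ Wp apr Wr) _; rewrite upm ltW.
have nn : forall r, adj p r -> 0 <= - (g p r * (u r - u p)).
  move=> r apr; rewrite oppr_ge0 pmulr_rle0 ?gpos // subr_le0; exact: le.
have s0 : \sum_(r | adj p r) - (g p r * (u r - u p)) = 0.
  by rewrite sumrN harm // oppr0.
have := @psumr_eq0P _ _ (fun r => adj p r) (fun r => - (g p r * (u r - u p))) nn s0 q apq.
move/eqP; rewrite oppr_eq0 mulf_eq0 (gt_eqF (gpos apq)) /= subr_eq0 => /eqP uq.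
have Wq : W q.
  apply: contraT => nWq; have := out _ _ Wp apq nWq; rewrite uq upm leNgt um.
  done.
have := minp q; rewrite Wq uq upm eqxx => /(_ isT).
rewrite /q shE ?eqxx; move: p1 pl; set a := (p i0 : nat); lia.
Qed.


Definition Op (u : {ffun V -> R^o}) : {ffun V -> R^o} :=
  [ffun p => if inD p then \sum_(q | adj p q) g p q * (u q - u p) else u p].

Lemma Op_lin : linear Op.
Proof.
move=> a u v; apply/ffunP => p; rewrite !ffunE; case: ifP => _ //.
rewrite /GRing.scale /= mulr_sumr -big_split; apply: eq_bigr => q _; rewrite !ffunE /=.
rewrite /GRing.scale /=. ring.
Qed.

HB.instance Definition _ := GRing.isLinear.Build R _ _ _ Op Op_lin.

Lemma fapp (f1 f2 : {ffun V -> R^o}) x : f1 = f2 -> f1 x = f2 x.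
Proof. by move->. Qed.

Lemma Op_ker (w : {ffun V -> R^o}) : Op w = 0 -> forall p, (w p : R) <= 0.
Proof.
move=> hw p; case: (boolP (inD p)) => Dp; last first.
  by have := fapp p hw; rewrite !ffunE (negbTE Dp) => ->.
apply: (@maxp (fun x => inD x) (fun x => (w x : R))) => //.
  by move=> x Dx; have := fapp x hw; rewrite !ffunE Dx.
move=> x y _ _ nDy; have := fapp y hw; rewrite !ffunE (negbTE nDy) => ->.
exact: lexx.
Qed.

Lemma Op_inj : injective Op.
Proof.
move=> u v e.
have hw : Op (u - v) = 0.
  by rewrite linearB; change (Op u - Op v = 0); rewrite e subrr.
have hw' : Op (- (u - v)) = 0.
  by rewrite linearN; change (- Op (u - v) = 0); rewrite hw oppr0.
move: hw hw'; set w := u - v => hw hw'.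
suff : w = 0 by move/eqP; rewrite subr_eq0 => /eqP.
apply/ffunP => p.
have h1 := Op_ker hw p; have h2 := Op_ker hw' p.
rewrite ffunE oppr_le0 in h2.
rewrite [RHS]ffunE; apply/eqP; rewrite eq_le; apply/andP; split; [exact: h1 | exact: h2].
Qed.

Lemma dir_exists (phi : V -> R) : exists u, dirichlet_sol g phi u.
Proof.
pose f : 'End({ffun V -> R^o}) := linfun Op.
have kf : lker f == 0%VS.
  by apply/lker0P => x y; rewrite !lfunE; exact: Op_inj.
pose rhs : {ffun V -> R^o} := [ffun p => if inD p then 0 else if inB p then phi p else 0].
have E : Op ((f^-1)%VF rhs) = rhs.
  by rewrite -[Op _]lfunE (lker0_lfunVK kf).
exists (fun p => (f^-1)%VF rhs p).
split; [move=> p Dp | split; [move=> b Bb | move=> p nD nB]].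
- by have := fapp p E; rewrite !ffunE Dp.
- have nD : ~~ inD b by case/andP: Bb.
  by have := fapp b E; rewrite !ffunE (negbTE nD) Bb.
- by have := fapp p E; rewrite !ffunE (negbTE nD) (negbTE nB).
Qed.

Lemma Sg_sol (phi : V -> R) : dirichlet_sol g phi (Sg g phi).
Proof. exact: (epsilon_spec _ _ (dir_exists phi)). Qed.

End Analysis.




Lemma J_minus d n t (b : pt d n) i : inB b -> (b i : nat) = 0%N -> (ssum b <= t)%N -> inJ t b.
Proof.
move=> Bb bi hs; apply/orP; left; apply/existsP.
have hl : (ssum b < t.+1)%N by [].
exists (Ordinal hl); rewrite /inKm Bb eqxx /=; apply/existsP; exists i; by rewrite bi.
Qed.

Lemma J_plus d n t (b : pt d n) i : inB b -> (b i : nat) = n.+1 -> (ssum b <= t.+1)%N -> inJ t b.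
Proof.
move=> Bb bi hs; apply/orP; right; apply/existsP.
have hl : (ssum b < t.+2)%N by [].
exists (Ordinal hl); rewrite /inKp Bb eqxx /=; apply/eqP/anti_leq/andP; split.
  by apply/bigmax_leqP => j _; rewrite -ltnS ltn_ord.
have := leq_bigmax (F := fun j => (b j : nat)) i; by rewrite bi.
Qed.

Lemma notJ d n t (b : pt d n) :
  (t.+1 < ssum b)%N \/ ((t < ssum b)%N /\ forall i, (b i <= n)%N) -> ~~ inJ t b.
Proof.
move=> h; rewrite /inJ negb_or; apply/andP; split; apply/negP => /existsP [l /and3P [_ /eqP hs hm]].
  have := ltn_ord l; case: h => [|[]]; lia.
have := ltn_ord l; case: h => [|[h1 h2]]; first lia.
have : (\max_(i < d) (b i : nat) <= n)%N by apply/bigmax_leqP => i _; exact: h2.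
by rewrite (eqP hm) ltnn.
Qed.

Lemma mu_lt1 S s s' n x x' : (s' <= S)%N -> (s < s')%N ->
  ((S - s') * n.+2 + (n.+1 - x') < (S - s) * n.+2 + (n.+1 - x))%N.
Proof.
move=> h1 h2; have h : ((S - s').+1 <= S - s)%N by lia.
have := leq_mul h (leqnn n.+2); rewrite mulSn; lia.
Qed.

Lemma mu_lt2 S s n x x' : (x < x')%N -> (x' <= n.+1)%N ->
  ((S - s) * n.+2 + (n.+1 - x') < (S - s) * n.+2 + (n.+1 - x))%N.
Proof. by move=> h1 h2; rewrite ltn_add2l; lia. Qed.

Lemma ssum_le d n (q : pt d n) : (ssum q <= d * n.+1)%N.
Proof.
rewrite /ssum.
have h : (\sum_(i < d) (q i : nat) <= \sum_(i < d) n.+1)%N.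
  by apply: leq_sum => i _; rewrite -ltnS ltn_ord.
by apply: (leq_trans h); rewrite sum_nat_const card_ord.
Qed.

Section Dirs.
Local Open Scope ring_scope.

Lemma dir12 (R : realFieldType) (d n : nat) (g : pt d n -> pt d n -> R)
  (gpos : forall p q, adj p q -> 0 < g p q) (d0 : (0 < d)%N) (t : nat) (phi : pt d n -> R) :
  in_ker_T1 g t phi -> in_ker_T g t phi.
Proof.
have [harm [bnd zer]] := Sg_sol gpos d0 phi.
move=> [oJ hL]; split => //.
set u := Sg g phi in harm bnd zer hL *.
have key : forall (v : pt d n -> R),
    (forall p, inD p -> \sum_(q | adj p q) g p q * (v q - v p) = 0) ->
    (forall q, inD q -> ssum q = t.+1 -> v q = 0) ->
    (forall b, inB b -> ~~ inJ t b -> v b = 0) ->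
    forall q, inD q -> (t.+1 < ssum q)%N -> v q <= 0.
  move=> v hv hvL hvB q Dq hq.
  apply: (@maxp _ _ _ g gpos d0 (fun x => inD x && (t.+1 < ssum x)%N) v);
    [by move=> x /andP[] | by move=> x /andP[Dx _]; exact: hv | | by rewrite Dq].
  move=> x y /andP[Dx hx] axy nW.
  have [j [hj1 hj2]] := adj_nb axy.
  have hs := ssum_diff hj1.
  have xj := (inDP _ Dx) j.
  case: (boolP (inD y)) => Dy.
    rewrite Dy /= -leqNgt in nW.
    rewrite hvL //; move: hs hj2 nW hx xj; set a := (x j : nat); set b := (y j : nat); lia.
  have By := adj_B axy Dy.
  rewrite hvB //; apply: notJ.
  case: hj2 => hj2.
    right; split; first by move: hs hj2 hx xj; set a := (x j : nat); set b := (y j : nat); lia.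
    move=> k; case: (eqVneq k j) => [->|kj]; first by move: hj2 xj; set a := (x j : nat); set b := (y j : nat); lia.
    by rewrite hj1 //; have := (inDP _ Dx) k => /andP[].
  left; move: hs hj2 hx xj; set a := (x j : nat); set b := (y j : nat); lia.
have zU : forall q, inD q -> (t.+1 < ssum q)%N -> u q = 0.
  move=> q Dq hq; apply/eqP; rewrite eq_le key //=; last 2 first.
  - by move=> x Dx hx; apply: hL; rewrite /inL Dx hx eqxx.
  - by move=> b Bb nJ; rewrite bnd // oJ.
  have := key (fun x => - u x) _ _ _ q Dq hq; rewrite oppr_le0; apply.
  - move=> p Dp; rewrite (eq_bigr (fun r => - (g p r * (u r - u p)))).
      by rewrite sumrN harm // oppr0.
    by move=> r _; ring.
  - by move=> x Dx hx; rewrite hL ?oppr0 // /inL Dx hx eqxx.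
  - by move=> b Bb nJ; rewrite bnd // oJ // oppr0.
move=> b Bb nJ; rewrite /DtN /qnb; case: pickP => [q /andP[abq Dq] | //].
have ub : u b = 0 by rewrite bnd // oJ.
suff uq : u q = 0 by change (g b q * (u q - u b) = 0); rewrite uq ub subrr mulr0.
rewrite adjC in abq.
have [j [hj1 hj2]] := adj_nb abq.
have hs := ssum_diff hj1.
have nDb : ~~ inD b by case/andP: Bb.
have [i hi] := notD_ex nDb.
have qj := (inDP _ Dq) j.
have ij : i = j.
  apply/eqP; apply: contraT => ij; have := (inDP _ Dq) i; rewrite -hj1 //; lia.
subst i.
case: hi => hi.
  have hb : (t < ssum b)%N by rewrite ltnNge; apply: contra nJ; exact: J_minus hi.
  apply: zU => //; move: hs hj2 hb hi qj; set a := (q j : nat); set c := (b j : nat); lia.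
have hb : (t.+1 < ssum b)%N by rewrite ltnNge; apply: contra nJ; exact: J_plus hi.
have : (t < ssum q)%N by move: hs hj2 hb hi qj; set a := (q j : nat); set c := (b j : nat); lia.
rewrite leq_eqVlt => /orP[/eqP hq | hq]; last exact: zU.
by apply: hL; rewrite /inL Dq -hq eqxx.
Qed.

Lemma dir21 (R : realFieldType) (d n : nat) (g : pt d n -> pt d n -> R)
  (gpos : forall p q, adj p q -> 0 < g p q) (d0 : (0 < d)%N) (t : nat) (phi : pt d n -> R) :
  in_ker_T g t phi -> in_ker_T1 g t phi.
Proof.
have [harm [bnd zer]] := Sg_sol gpos d0 phi.
move=> [oJ hT]; split => //.
set u := Sg g phi in harm bnd zer hT *.
pose j0 : 'I_d := Ordinal d0.
pose S := (d * n.+1)%N.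
pose mu := fun q : pt d n => ((S - ssum q) * n.+2 + (n.+1 - q j0))%N.
suff H : forall N q, (mu q < N)%N -> inD q -> (t < ssum q)%N -> u q = 0.
  by move=> x /andP[Dx /eqP hx]; apply: (H (mu x).+1) => //; rewrite hx.
elim => [//|N IH] q hN Dq hq.
case: (boolP [exists i, (q i : nat) == n]) => [/existsP [i /eqP qi] | nq].
  pose b := sh q i n.+1.
  have hbi : (b i : nat) = n.+1 by rewrite shE // eqxx.
  have hbj : forall j, j != i -> b j = q j.
    by move=> j ji; apply: val_inj; rewrite /= shE // (negbTE ji).
  have abq : adj q b by apply: adj_D_sh => //; right; rewrite qi.
  have nDb : ~~ inD b by apply/inDP => H; have := H i; rewrite hbi ltnn andbF.
  have Bb := adj_B abq nDb.
  have hs := ssum_diff hbj.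
  have nJ : ~~ inJ t b by apply: notJ; left; move: hs hq hbi qi; set a := (q i : nat); set c := (b i : nat); lia.
  have := hT b Bb nJ; rewrite /DtN /qnb; case: pickP => [q' /andP[abq' Dq'] | H]; last first.
    by move: (H q); rewrite adjC abq Dq.
  have q'q : q' = q.
    have [j [hj1 hj2]] := adj_nb abq'.
    have q'i := (inDP _ Dq') i.
    case: (eqVneq j i) => [ji | ji]; last first.
      by move: q'i; rewrite hj1 1?eq_sym // hbi ltnn andbF.
    subst j; apply/ffunP => k; apply: val_inj => /=.
    case: (eqVneq k i) => [-> | ki]; last by rewrite hj1 // hbj.
    by move: hj2 hbi q'i qi; set a := (q' i : nat); set c := (b i : nat); set e := (q i : nat); lia.
  subst q'; change (g b q * (u q - u b) = 0 -> u q = 0).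
  have gbq : 0 < g b q by apply: gpos; rewrite adjC.
  rewrite (bnd b Bb) (oJ _ nJ) subr0 => /eqP; rewrite mulf_eq0 (gt_eqF gbq) /=.
  by move/eqP.
have qlt : forall i, (q i < n)%N.
  move=> i; have /andP[_ h] := (inDP _ Dq) i; rewrite ltn_neqAle h andbT.
  by apply: contra nq => /eqP qi; apply/existsP; exists i; rewrite qi.
pose p := sh q j0 (q j0).+1.
have hp0 : (p j0 : nat) = (q j0).+1 by rewrite shE ?eqxx //; have := qlt j0; lia.
have hpj : forall j, j != j0 -> p j = q j.
  by move=> j ji; apply: val_inj; rewrite /= shE ?(negbTE ji) //; have := qlt j0; lia.
have apq : adj q p by apply: adj_D_sh => //; [have := qlt j0; lia | right].
have Dp : inD p.
  apply/inDP => j; case: (eqVneq j j0) => [-> | ji]; first by rewrite hp0; have := qlt j0; lia.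
  by rewrite hpj //; exact: (inDP _ Dq).
have hs := ssum_diff hpj.
have hsp : ssum p = (ssum q).+1 by move: hs hp0; set a := (p j0 : nat); lia.
have up : u p = 0.
  apply: (IH p) => //; last by rewrite hsp; lia.
  have h2 : (mu p < mu q)%N.
    by rewrite /mu; apply: mu_lt1; [exact: ssum_le | rewrite hsp].
  exact: leq_trans h2 hN.
have apq' : adj p q by rewrite adjC.
have := harm p Dp; rewrite (bigD1 q apq') /= big1; last first.
  move=> r /andP[apr rq]; rewrite up subr0.
  suff -> : u r = 0 by rewrite mulr0.
  have [j [hj1 hj2]] := adj_nb apr.
  have hsr := ssum_diff hj1.
  have pj := (inDP _ Dp) j.
  case: (boolP (inD r)) => Dr.
    case: hj2 => hj2.
      case: (eqVneq j j0) => [ji | ji].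
        subst j; case/eqP: rq; apply/ffunP => k; apply: val_inj => /=.
        case: (eqVneq k j0) => [-> | kj]; last by rewrite hj1 // hpj.
        by move: hj2 hp0; set a := (r j0 : nat); set c := (p j0 : nat); lia.
      have rj0 : (r j0 : nat) = (q j0).+1 by rewrite hj1 1?eq_sym // hp0.
      apply: (IH r) => //; last by move: hsr hj2 hsp hq; set a := (r j : nat); set c := (p j : nat); lia.
      have hrs : ssum r = ssum q by move: hsr hj2 hsp; set a := (r j : nat); set c := (p j : nat); lia.
      have h2 : (mu r < mu q)%N.
        by rewrite /mu hrs rj0; apply: mu_lt2 => //; have := qlt j0; lia.
      exact: leq_trans h2 hN.
    apply: (IH r) => //; last by move: hsr hj2 hsp hq; set a := (r j : nat); set c := (p j : nat); lia.
    have hrs : ssum r = (ssum q).+2 by move: hsr hj2 hsp; set a := (r j : nat); set c := (p j : nat); lia.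
    have h2 : (mu r < mu q)%N.
      by rewrite /mu; apply: mu_lt1; [exact: ssum_le | rewrite hrs].
    exact: leq_trans h2 hN.
  have Br := adj_B apr Dr.
  rewrite bnd // oJ //; apply: notJ.
  case: hj2 => hj2.
    right; split; first by move: hsr hj2 hsp hq; set a := (r j : nat); set c := (p j : nat); lia.
    move=> k; case: (eqVneq k j) => [-> | kj]; first by move: hj2 pj; set a := (r j : nat); set c := (p j : nat); lia.
    by rewrite hj1 //; have := (inDP _ Dp) k => /andP[].
  left; move: hsr hj2 hsp hq; set a := (r j : nat); set c := (p j : nat); lia.
rewrite addr0 up subr0 => /eqP; rewrite mulf_eq0 (gt_eqF (gpos _ _ apq')) /=.
by move/eqP.
Qed.

End Dirs.

Unset Implicit Arguments.
Local Open Scope ring_scope.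

Theorem lemma4p1 (R : realFieldType) (d n : nat) (g : pt d n -> pt d n -> R)
  (hd : (2 <= d)%N) (hn : (1 <= n)%N)
  (gsym : forall p q, g p q = g q p)
  (gpos : forall p q, adj p q -> 0 < g p q)
  (t : nat) (ht1 : (d - 1 <= t)%N) (ht2 : (t <= d * n - 1)%N) :
  forall phi : pt d n -> R, in_ker_T1 g t phi <-> in_ker_T g t phi.
Proof.
move=> phi; have d0 : (0 < d)%N by apply: leq_trans hd.
split; [exact: dir12 | exact: dir21].
Qed.
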